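(* Let $p$ be a prime, $e\geq 2$, $N=\langle\sigma\rangle$ cyclic of order $p^e$, and let $a$ be an integer with $a\equiv 1\pmod p$, and $u$ any integer. (a) If $p$ is odd, then the order of $[\sigma^u,\varphi_a]$ in $\mathrm{Hol}(N)$ is $\max\{p^{e-v_p(u)},|\varphi_a|\}$. (b) If $p=2$, then the order of $[\sigma^u,\varphi_a]$ is $\max\{2^{e-v_2(u)},|\varphi_a|\}$ if $a\equiv 1\pmod 4$, and $\max\{2^{e-v_2(u)-v_2(\frac{a+1}{2})},|\varphi_a|\}$ if $a\equiv 3\pmod 4$.
   Context: For an integer $a$ coprime to $p$, $\varphi_a\in\mathrm{Aut}(N)$ is $\sigma\mapsto\sigma^a$. Elements of $\mathrm{Hol}(N)=N\rtimes\mathrm{Aut}(N)$ are written $[\sigma^u,\varphi_a]$ with $[\sigma^u,\varphi_a][\sigma^v,\varphi_b]=[\sigma^{u+va},\varphi_{ab}]$. $v_p(m)$ is the $p$-adic valuation of $m$, with $v_p(0)=\infty$ (so that $p^{e-v_p(u)}$ is interpreted as $1$ when $\sigma^u=1$, i.e. exponents below $0$ give order $1$). *)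

(* Defs.v *)
From Stdlib Require Import ClassicalEpsilon.
From mathcomp Require Import all_boot all_order all_algebra.
Set Implicit Arguments. Unset Strict Implicit. Unset Printing Implicit Defensive.
Import Order.TTheory GRing.Theory Num.Theory.
Local Open Scope ring_scope.

(* Holomorph Hol(N) of N = <sigma> cyclic of order n, modelled concretely:
   the element [sigma^u, phi_a] is the pair (u, a) of integers, read modulo n
   (a is meant to be a unit mod n).  Multiplication follows the paper:
   [sigma^u,phi_a][sigma^v,phi_b] = [sigma^(u+va), phi_(ab)]. *)
Definition hol_mul (n : nat) (x y : int * int) : int * int :=
  (((x.1 + y.1 * x.2) %% n)%Z, ((x.2 * y.2) %% n)%Z).

Definition hol_pow (n : nat) (x : int * int) (k : nat) : int * int :=
  iter k (hol_mul n x) (0, 1).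

Definition hol_eq (n : nat) (x y : int * int) : bool :=
  ((x.1 == y.1 %[mod n])%Z) && ((x.2 == y.2 %[mod n])%Z).

(* least positive k with P k (0 if none exists) *)
Definition least_pos (P : pred nat) : nat :=
  match excluded_middle_informative (exists k, (0 < k)%N && P k) with
  | left H => ex_minn H
  | right _ => 0%N
  end.

Definition hol_order (n : nat) (x : int * int) : nat :=
  least_pos (fun k => hol_eq n (hol_pow n x k) (0, 1)).

Definition aut_order (n : nat) (a : int) : nat := hol_order n (0, a).

(* p ^ (e - v_p(x_1) - ... - v_p(x_k)), with v_p(0) = infinity and negative
   exponents giving 1 (truncated subtraction on nat). *)
Definition ppow_val (p e : nat) (xs : seq int) : nat :=
  if has (fun x : int => x == 0) xs then 1%N
  else (p ^ (e - \sum_(x <- xs) logn p `|x|%N))%N.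

(* Main.v *)
Require Import Defs.
From Stdlib Require Import ClassicalEpsilon.
From mathcomp Require Import all_boot all_order all_algebra.
From mathcomp Require Import ring zify.
Import Order.TTheory GRing.Theory Num.Theory.
Local Open Scope ring_scope.

Definition S (a : int) (k : nat) : int := \sum_(i < k) a ^+ i.

Lemma S0 a : S a 0 = 0.
Proof. by rewrite /S big_ord0. Qed.

Lemma S_recl a k : S a k.+1 = 1 + a * S a k.
Proof.
by rewrite /S big_ord_recl expr0 mulr_sumr; congr (_ + _); apply: eq_bigr => i _; rewrite exprS.
Qed.

Lemma S_recr a k : S a k.+1 = S a k + a ^+ k.
Proof. by rewrite /S big_ord_recr. Qed.

Lemma S_add a m n : S a (m + n) = S a m + a ^+ m * S a n.
Proof.
elim: n => [|n IH]; first by rewrite addn0 S0 mulr0 addr0.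
by rewrite addnS S_recr IH S_recr exprD; ring.
Qed.

Lemma S_mul a m n : S a (m * n) = S a m * S (a ^+ m) n.
Proof.
elim: n => [|n IH]; first by rewrite muln0 !S0 mulr0.
by rewrite mulnS S_add IH S_recl; ring.
Qed.

Lemma S_sub1 a k : a ^+ k - 1 = (a - 1) * S a k.
Proof. by rewrite subrX1. Qed.

Lemma dvd_powsub (d a : int) m : (d %| a - 1)%Z -> (d %| a ^+ m - 1)%Z.
Proof. by move=> H; rewrite S_sub1 dvdz_mulr. Qed.

Lemma S_modp (d a : int) k : (d %| a - 1)%Z -> (d %| S a k - k%:Z)%Z.
Proof.
move=> H; elim: k => [|k IH]; first by rewrite S0 subr0 dvdz0.
have -> : S a k.+1 - k.+1%:Z = (S a k - k%:Z) + (a ^+ k - 1).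
  by rewrite S_recr -addn1 PoszD; ring.
by rewrite rpredD // dvd_powsub.
Qed.

Lemma S_sumS a k : S a k - k%:Z = (a - 1) * \sum_(i < k) S a i.
Proof.
elim: k => [|k IH]; first by rewrite S0 big_ord0; ring.
rewrite big_ord_recr /= mulrDr -IH -S_sub1 S_recr -addn1 PoszD; ring.
Qed.

Lemma sum_nat_int k : \sum_(i < k) (i%:Z) = ('C(k, 2))%:Z.
Proof.
elim: k => [|k IH]; first by rewrite big_ord0.
by rewrite big_ord_recr /= IH binS bin1 PoszD.
Qed.

Lemma lognn' p : prime p -> logn p p = 1%N.
Proof. by move=> hp; rewrite -[X in logn p X]expn1 pfactorK. Qed.

Lemma dvdz_log p e (x : int) : prime p ->
  ((p ^ e)%:Z %| x)%Z = (x == 0) || (e <= logn p `|x|)%N.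
Proof.
move=> hp; case: (eqVneq x 0) => [->|x0] /=; first by rewrite dvdz0.
by rewrite dvdzE /= pfactor_dvdn // absz_gt0.
Qed.

Lemma vexact p j (x : int) : prime p -> ((p ^ j)%:Z %| x)%Z ->
  ~~ ((p ^ j.+1)%:Z %| x)%Z -> x != 0 /\ logn p `|x| = j.
Proof.
move=> hp; rewrite !dvdz_log //; case: (eqVneq x 0) => //= x0 h1 h2.
by split => //; apply/eqP; rewrite eqn_leq h1 andbT leqNgt.
Qed.

Lemma Sp p (a : int) : prime p -> (p%:Z %| a - 1)%Z -> (p = 2%N -> (4 %| a - 1)%Z) ->
  S a p != 0 /\ logn p `|S a p| = 1%N.
Proof.
move=> hp ha h4; apply: vexact => //.
  rewrite expn1; have -> : S a p = (S a p - p%:Z) + p%:Z by ring.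
  by rewrite rpredD ?dvdzz // S_modp.
case: (eqVneq p 2%N) => [p2|p2].
  subst p; move: (h4 erefl) => h; apply/negP => h'.
  have : (4 %| (S a 2 - (a - 1)))%Z by rewrite rpredB.
  have -> : S a 2 - (a - 1) = 2.
    by rewrite S_recr S_recl S0 expr1; ring.
  by [].
have p3 : (2 < p)%N.
  by move: (prime_gt1 hp); rewrite leq_eqVlt eq_sym (negbTE p2).
have hsum : (p%:Z %| \sum_(i < p) S a i)%Z.
  have -> : \sum_(i < p) S a i = \sum_(i < p) (S a i - i%:Z) + \sum_(i < p) (i%:Z).
    by rewrite -big_split /=; apply: eq_bigr => i _; ring.
  rewrite rpredD //; first by apply: rpred_sum => i _; apply: S_modp.
  by rewrite sum_nat_int dvdzE /= prime_dvd_bin.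
have h2 : ((p ^ 2)%:Z %| S a p - p%:Z)%Z.
  by rewrite S_sumS expnS expn1 PoszM dvdz_mul.
apply/negP => h.
have : ((p ^ 2)%:Z %| p%:Z)%Z.
  have -> : p%:Z = S a p - (S a p - p%:Z) by ring.
  by rewrite rpredB.
rewrite dvdzE /= => /dvdn_leq; rewrite prime_gt0 // => /(_ isT).
rewrite expnS expn1 => h'.
have := prime_gt1 hp; have := prime_gt0 hp.
by move: h'; rewrite -{3}(muln1 p) leq_pmul2l ?prime_gt0 // => q1 _ q2; by rewrite ltnNge q1 in q2.
Qed.

Lemma lte p (a : int) k : prime p -> (p%:Z %| a - 1)%Z -> (p = 2%N -> (4 %| a - 1)%Z) ->
  (0 < k)%N -> S a k != 0 /\ logn p `|S a k| = logn p k.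
Proof.
elim/ltn_ind: k a => k IH a hp ha h4 k0.
case: (boolP (p %| k)%N) => pk.
  set k' := (k %/ p)%N.
  have kE : k = (p * k')%N by rewrite /k' mulnC divnK.
  have k'0 : (0 < k')%N by move: k0; rewrite kE muln_gt0 => /andP[].
  have lt : (k' < k)%N by rewrite kE ltn_Pmull // prime_gt1.
  have [Sp0 Spl] := Sp _ _ hp ha h4.
  have [S'0 S'l] := IH k' lt (a ^+ p) hp (dvd_powsub _ _ p ha) (fun h => dvd_powsub _ _ p (h4 h)) k'0.
  rewrite kE S_mul; split; first by rewrite mulf_neq0.
  rewrite abszM lognM ?absz_gt0 // Spl S'l (lognM _ (prime_gt0 hp) k'0).
  by rewrite (lognn' _ hp).
have nd : ~~ (p%:Z %| S a k)%Z.
  apply/negP => h.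
  have : (p%:Z %| k%:Z)%Z.
    have -> : k%:Z = S a k - (S a k - k%:Z) by ring.
    by rewrite rpredB // S_modp.
  by rewrite dvdzE /= => H; rewrite H in pk.
have S0' : S a k != 0 by apply/negP => /eqP h; rewrite h dvdz0 in nd.
split => //.
by rewrite !logn_coprime // prime_coprime //.
Qed.

Lemma hol_pow_eq n u a k : (1 < n)%N ->
  hol_pow n (u, a) k = ((u * S a k) %% n, (a ^+ k) %% n)%Z.
Proof.
move=> n1; elim: k => [|k IH].
  rewrite /hol_pow /= S0 mulr0 mod0z modz_small //.
rewrite /hol_pow iterS -/(hol_pow n (u, a) k) IH /hol_mul /=.
congr pair.
  rewrite -modzDmr modzMml modzDmr S_recl; congr (_ %% _)%Z; ring.
by rewrite modzMmr exprS.
Qed.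

Lemma holP n u a k : (1 < n)%N ->
  hol_eq n (hol_pow n (u, a) k) (0, 1) = (n%:Z %| u * S a k)%Z && (n%:Z %| a ^+ k - 1)%Z.
Proof.
move=> n1; rewrite hol_pow_eq // /hol_eq /= !modz_mod !eqz_mod_dvd subr0 //.
Qed.

Lemma least_pos_pow p c (P : pred nat) : prime p ->
  (forall k, (0 < k)%N -> P k = (c <= logn p k)%N) -> least_pos P = (p ^ c)%N.
Proof.
move=> hp HP.
have pc0 : (0 < p ^ c)%N by rewrite expn_gt0 prime_gt0.
have Pc : P (p ^ c)%N by rewrite HP // pfactorK.
rewrite /least_pos; case: excluded_middle_informative => [H|H]; last first.
  by exfalso; apply: H; exists (p ^ c)%N; rewrite pc0 Pc.
case: ex_minnP => m /andP[m0 Pm] min.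
apply/eqP; rewrite eqn_leq min ?pc0 ?Pc //=.
apply: dvdn_leq => //; rewrite pfactor_dvdn // -HP //.
Qed.

Lemma dvd_prod p e (x y : int) : prime p -> y != 0 ->
  ((p ^ e)%:Z %| x * y)%Z = (x == 0) || (e - logn p `|y| <= logn p `|x|)%N.
Proof.
move=> hp y0; rewrite dvdz_log // mulf_eq0 (negbTE y0) orbF.
case: (eqVneq x 0) => //= x0.
by rewrite abszM lognM ?absz_gt0 // leq_subLR addnC.
Qed.

Lemma maxn_pow p a b : (0 < p)%N -> (maxn (p ^ a) (p ^ b) = p ^ maxn a b)%N.
Proof.
move=> p0; case: (leqP a b) => ab.
  by apply/maxn_idPr; rewrite leq_pexp2l.
by apply/maxn_idPl; rewrite leq_pexp2l // ltnW.
Qed.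

Lemma n1_lt p e : prime p -> (2 <= e)%N -> (1 < p ^ e)%N.
Proof.
move=> hp he; have p1 := prime_gt1 hp.
apply: (leq_trans p1); rewrite -{1}(expn1 p); apply: leq_pexp2l; [exact: prime_gt0 | exact: ltnW].
Qed.

Lemma keyS p e a x k : prime p -> (p%:Z %| a - 1)%Z -> (p = 2%N -> (4 %| a - 1)%Z) ->
  (0 < k)%N ->
  ((p ^ e)%:Z %| x * S a k)%Z = ((if x == 0 then 0 else e - logn p `|x|) <= logn p k)%N.
Proof.
move=> hp ha h4 k0; have [S0' Sl] := lte _ _ _ hp ha h4 k0.
rewrite dvd_prod // Sl; case: (eqVneq x 0) => //= _.
by rewrite !leq_subLR addnC.
Qed.

Lemma caseA p e a u : prime p -> (2 <= e)%N -> (p%:Z %| a - 1)%Z ->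
  (p = 2%N -> (4 %| a - 1)%Z) ->
  hol_order (p ^ e) (u, a) = maxn (ppow_val p e [:: u]) (aut_order (p ^ e) a).
Proof.
move=> hp he ha h4; have n1 := n1_lt _ _ hp he.
set cu := if u == 0 then 0%N else (e - logn p `|u|)%N.
set ca := if (a - 1) == 0 then 0%N else (e - logn p `|a - 1|)%N.
have -> : hol_order (p ^ e) (u, a) = (p ^ maxn cu ca)%N.
  rewrite /hol_order; apply: least_pos_pow => // k k0.
  by rewrite holP // S_sub1 !(keyS _ _ _ _ _ hp ha h4 k0) geq_max.
have -> : aut_order (p ^ e) a = (p ^ ca)%N.
  rewrite /aut_order /hol_order; apply: least_pos_pow => // k k0.
  by rewrite holP // mul0r dvdz0 S_sub1 (keyS _ _ _ _ _ hp ha h4 k0).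
have -> : ppow_val p e [:: u] = (p ^ cu)%N.
  rewrite /ppow_val /= orbF big_seq1 /cu; by case: (u == 0).
by rewrite maxn_pow // prime_gt0.
Qed.

Lemma S2 a : S a 2 = 1 + a.
Proof. by rewrite S_recr S_recl S0 expr1; ring. Qed.

Lemma caseB e a u : (2 <= e)%N -> (4 %| a - 3)%Z ->
  hol_order (2 ^ e) (u, a)
  = maxn (ppow_val 2 e [:: u; ((a + 1) %/ 2)%Z]) (aut_order (2 ^ e) a).
Proof.
move=> he h3; have hp : prime 2 by [].
have n1 := n1_lt _ _ hp he.
set w := ((a + 1) %/ 2)%Z.
have d2a1 : (2 %| a + 1)%Z.
  have -> : a + 1 = (a - 3) + 4 by ring.
  by rewrite rpredD // (dvdz_trans _ h3).
have aw : a + 1 = w * 2 by rewrite /w divzK.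
have h2a : (2 %| a - 1)%Z.
  have -> : a - 1 = (a - 3) + 2 by ring.
  by rewrite rpredD // (dvdz_trans _ h3).
have n4a : ~~ (4 %| a - 1)%Z.
  apply/negP => h; have : (4 %| (a - 1) - (a - 3))%Z by rewrite rpredB.
  by have -> : (a - 1) - (a - 3) = 2 by ring.
have [a10 la1] : a - 1 != 0 /\ logn 2 `|a - 1| = 1%N by apply: vexact.
have ha2 : ((2 : nat)%:Z %| a ^+ 2 - 1)%Z by apply: dvd_powsub.
have h4a2 : (2%N = 2%N -> (4 %| a ^+ 2 - 1)%Z).
  move=> _; have -> : a ^+ 2 - 1 = (a - 1) * (w * 2) by rewrite -aw; ring.
  have -> : (4 : int) = 2 * 2 by [].
  by rewrite dvdz_mul // dvdz_mull.
set lw := logn 2 `|w|.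
set ca := if w == 0 then 1%N else maxn 1 (e - (1 + lw))%N.
pose cux (x : int) := if (x == 0) || (w == 0) then 0%N else (e - (logn 2 `|x| + lw))%N.
have charP : forall x k, (0 < k)%N ->
    ((2 ^ e)%:Z %| x * S a k)%Z && ((2 ^ e)%:Z %| (a - 1) * S a k)%Z
    = (maxn (cux x) ca <= logn 2 k)%N.
  move=> x k k0.
  case: (boolP (odd k)) => ok.
    have lk : logn 2 k = 0%N by rewrite logn_coprime // prime_coprime // dvdn2 ok.
    have nd : ~~ (2 %| S a k)%Z.
      apply/negP => h.
      have : (2 %| k%:Z)%Z.
        have -> : k%:Z = S a k - (S a k - k%:Z) by ring.
        by rewrite rpredB // S_modp.
      by rewrite dvdzE /= dvdn2 ok.
    have S0' : S a k != 0 by apply/negP => /eqP h; rewrite h dvdz0 in nd.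
    have lS : logn 2 `|S a k| = 0%N.
      by rewrite logn_coprime // prime_coprime //; rewrite dvdzE in nd.
    rewrite lk leqn0 [X in _ && X]dvd_prod // lS (negbTE a10) la1 /= subn0.
    have -> : (e <= 1)%N = false by rewrite leqNgt he.
    rewrite andbF; apply/esym/negbTE; rewrite -lt0n /ca.
    by case: (w == 0); rewrite !leq_max /= orbT.
  have k2 : (2 %| k)%N by rewrite dvdn2 ok.
  set k' := (k %/ 2)%N.
  have kE : k = (2 * k')%N by rewrite /k' mulnC divnK.
  have k'0 : (0 < k')%N by move: k0; rewrite kE muln_gt0 => /andP[].
  have lk : logn 2 k = (1 + logn 2 k')%N by rewrite kE lognM.
  have SE : S a k = w * 2 * S (a ^+ 2) k' by rewrite kE S_mul S2 addrC aw.
  have [S'0 S'l] := lte _ _ _ hp ha2 h4a2 k'0.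
  case: (eqVneq w 0) => [w0|w0].
    rewrite SE w0 !mul0r mulr0 dvdz0 /cux /ca w0 orbT /= lk.
    by rewrite mulr0 dvdz0 max0n leq_addr.
  have SE0 : S a k != 0 by rewrite SE !mulf_neq0.
  have lS : logn 2 `|S a k| = (lw + logn 2 k)%N.
    have l2 : logn 2 `|2| = 1%N by [].
    rewrite SE !abszM lognM ?muln_gt0 ?absz_gt0 ?w0 ?S'0 //.
    by rewrite lognM ?absz_gt0 ?w0 // S'l lk l2 addnA.
  rewrite !dvd_prod // lS (negbTE a10) la1 /cux /ca (negbTE w0) orbF /=.
  rewrite lk; case: (eqVneq x 0) => [x0|x0] /=; apply/idP/idP; lia.
have -> : hol_order (2 ^ e) (u, a) = (2 ^ maxn (cux u) ca)%N.
  rewrite /hol_order; apply: least_pos_pow => // k k0.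
  by rewrite holP // S_sub1 charP.
have -> : aut_order (2 ^ e) a = (2 ^ ca)%N.
  rewrite /aut_order /hol_order; apply: least_pos_pow => // k k0.
  have := charP 0 k k0; rewrite mul0r dvdz0 /= /cux eqxx /= max0n => <-.
  by rewrite holP // mul0r dvdz0 S_sub1.
have -> : ppow_val 2 e [:: u; w] = (2 ^ cux u)%N.
  by rewrite /ppow_val /= orbF big_cons big_seq1 /cux; case: ifP.
by rewrite maxn_pow.
Qed.

Theorem lemma3p2 (p e : nat) (a u : int) :
  prime p -> (2 <= e)%N -> (a == 1 %[mod p])%Z ->
  (odd p ->
     hol_order (p ^ e) (u, a) = maxn (ppow_val p e [:: u]) (aut_order (p ^ e) a))
  /\
  (p = 2%N ->
     ((a == 1 %[mod 4])%Z ->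
        hol_order (2 ^ e) (u, a) = maxn (ppow_val 2 e [:: u]) (aut_order (2 ^ e) a))
     /\
     ((a == 3 %[mod 4])%Z ->
        hol_order (2 ^ e) (u, a)
        = maxn (ppow_val 2 e [:: u; ((a + 1) %/ 2)%Z]) (aut_order (2 ^ e) a))).
Proof.
move=> hp he ha; rewrite eqz_mod_dvd in ha; split.
  by move=> op; apply: caseA => // p2; rewrite p2 in op.
move=> p2; subst p; split => h; rewrite eqz_mod_dvd in h.
  exact: caseA.
exact: caseB.
Qed.
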